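(* Let $d\ge 3$, $\lambda>0$ with $\log d\lesssim\lambda\lesssim d$, $\rho_0=\log^{-c_0}d$ for a constant $c_0>0$, $\mu=\rho_0/(d+\lambda)$, and let $(a,b,c)$ solve \[ \dot a=a(24-16a-8r),\quad \dot b=8(1+\lambda)(1-r)b-16(1+\lambda)^2b^2,\quad \dot c=8(1-r)c-16c^2, \] with $r=a+(1+\lambda)b+(d-2)c$ and $a(0)=b(0)=c(0)=\mu$. Let $B=(1+\lambda)b$, $C=(d-2)c$, fix $\rho\in(0,1/12)$ and let $T_{1a}=\inf\{t\ge0: r(t)\ge\rho\}$. Then, for $d$ large enough: (1) For all $t\in[0,T_{1a}]$, $r(t)\le\rho$ and \[ a(0)e^{24(1-\rho)t}\le a(t)\le a(0)e^{24t},\quad b(0)e^{8(1+\lambda)(1-3\rho)t}\le b(t)\le b(0)e^{8(1+\lambda)t}, \] \[ c(0)e^{(8(1-\rho)-16\rho/(d-2))t}\le c(t)\le c(0)e^{8t}. \] (2) $T_{1a}=O(\lambda^{-1}\log d)$. (3) $a(T_{1a})=O(\rho_0/d)$, $C(T_{1a})=O(\rho_0)$, and $B(T_{1a})=\rho-a(T_{1a})-C(T_{1a})=\rho(1+o(1))$.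
   Context: This ODE is the population gradient flow of the phase-retrieval model $y=(x^\top w_\star)^2+\nu$, $x\sim\mathcal N(0,I_d+\lambda vv^\top)$ ($v\perp w_\star$ unit vectors), with network $f_W(x)=\sum_{j=1}^d(w_j^\top x)^2$, in the coordinates $WW^\top=a\,w_\star w_\star^\top+b\,vv^\top+c(I-w_\star w_\star^\top-vv^\top)$, started from $WW^\top=\mu I_d$. Asymptotic notation refers to $d\to\infty$. *)

(* Defs.v *)
From Stdlib Require Import Reals.
From Coquelicot Require Import Coquelicot.
Open Scope R_scope.

Definition rfun (d : nat) (lam : R) (a b c : R -> R) (t : R) : R :=
  a t + (1 + lam) * b t + (INR d - 2) * c t.

Definition rho0 (d : nat) (c0 : R) : R := Rpower (ln (INR d)) (- c0).

Definition mu (d : nat) (lam c0 : R) : R := rho0 d c0 / (INR d + lam).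

Definition is_solution (d : nat) (lam c0 : R) (a b c : R -> R) : Prop :=
  a 0 = mu d lam c0 /\ b 0 = mu d lam c0 /\ c 0 = mu d lam c0 /\
  (forall t, 0 < t ->
     is_derive a t (a t * (24 - 16 * a t - 8 * rfun d lam a b c t)) /\
     is_derive b t (8 * (1 + lam) * (1 - rfun d lam a b c t) * b t
                    - 16 * (1 + lam) ^ 2 * (b t) ^ 2) /\
     is_derive c t (8 * (1 - rfun d lam a b c t) * c t - 16 * (c t) ^ 2)) /\
  filterlim a (at_right 0) (locally (a 0)) /\
  filterlim b (at_right 0) (locally (b 0)) /\
  filterlim c (at_right 0) (locally (c 0)).

(* T_{1a} = inf { t >= 0 : r(t) >= rho }  (in Rbar; +oo if the set is empty) *)
Definition T1a (d : nat) (lam rho : R) (a b c : R -> R) : Rbar :=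
  Glb_Rbar (fun t => 0 <= t /\ rho <= rfun d lam a b c t).

(* Main.v *)
Require Import Defs.
From Stdlib Require Import Reals Lra Classical.
From Coquelicot Require Import Coquelicot.
Open Scope R_scope.

Definition ED (f : R -> R) (x : R) : Prop :=
  forall eps, 0 < eps -> exists del, 0 < del /\
    forall s, Rabs (s - x) < del -> Rabs (f s - f x) < eps.
Definition RC (f : R -> R) : Prop :=
  forall eps, 0 < eps -> exists del, 0 < del /\
    forall s, 0 < s < del -> Rabs (f s - f 0) < eps.

Lemma ball_R (x e y : R) : ball x e y <-> Rabs (y - x) < e.
Proof. reflexivity. Qed.

Lemma cont_ED f x : continuous f x -> ED f x.
Proof.
  intros H eps He.
  destruct (proj1 (filterlim_locally f (f x)) H (mkposreal eps He)) as [[del Hd] Hl].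
  exists del; split; [exact Hd|]. intros s Hs. apply (Hl s); exact Hs.
Qed.

Lemma rc_RC f : filterlim f (at_right 0) (locally (f 0)) -> RC f.
Proof.
  intros H eps He.
  destruct (proj1 (filterlim_locally f (f 0)) H (mkposreal eps He)) as [[del Hd] Hl].
  exists del; split; [exact Hd|]. intros s Hs. apply (Hl s). apply ball_R. simpl. rewrite Rabs_right; lra. lra.

Qed.

Lemma ED_RC f : ED f 0 -> RC f.
Proof.
  intros H eps He. destruct (H eps He) as [del [Hd Hl]]. exists del; split; auto.
  intros s Hs. apply Hl. rewrite Rabs_right; lra.
Qed.

Lemma der_ED f x : ex_derive f x -> ED f x.
Proof. intros H; apply cont_ED. exact (ex_derive_continuous f x H). Qed.

Lemma RC_lin f g k : RC f -> RC g -> RC (fun s => f s + k * g s).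
Proof.
  intros Hf Hg eps He.
  destruct (Hf (eps/2)) as [d1 [H1 P1]]; [lra|].
  destruct (Hg (eps/2/(Rabs k + 1))) as [d2 [H2 P2]].
  { apply Rdiv_lt_0_compat; [lra|]. pose proof (Rabs_pos k); lra. }
  exists (Rmin d1 d2); split. { apply Rmin_pos; auto. }
  intros s Hs. pose proof (Rmin_l d1 d2); pose proof (Rmin_r d1 d2).
  specialize (P1 s ltac:(lra)). specialize (P2 s ltac:(lra)).
  replace (f s + k * g s - (f 0 + k * g 0)) with ((f s - f 0) + k * (g s - g 0)) by ring.
  eapply Rle_lt_trans. apply Rabs_triang. rewrite Rabs_mult.
  assert (Rabs k * Rabs (g s - g 0) <= Rabs k * (eps/2/(Rabs k + 1))).
  { apply Rmult_le_compat_l. apply Rabs_pos. lra. }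
  assert (Rabs k * (eps/2/(Rabs k + 1)) < eps/2).
  { pose proof (Rabs_pos k). apply Rmult_lt_reg_r with (Rabs k + 1). lra.
    field_simplify; lra. }
  lra.
Qed.

Lemma RC_le g h t : 0 < t -> RC g -> RC h -> (forall s, 0 < s < t -> g s <= h s) -> g 0 <= h 0.
Proof.
  intros Ht Hg Hh Hle. destruct (Rle_or_lt (g 0) (h 0)) as [|Hc]; auto. exfalso.
  set (e := (g 0 - h 0) / 2).
  destruct (Hg e) as [d1 [H1 P1]]; [unfold e; lra|].
  destruct (Hh e) as [d2 [H2 P2]]; [unfold e; lra|].
  set (s := Rmin t (Rmin d1 d2) / 2).
  assert (0 < Rmin t (Rmin d1 d2)) by (repeat apply Rmin_pos; auto).
  pose proof (Rmin_l t (Rmin d1 d2)); pose proof (Rmin_r t (Rmin d1 d2)).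
  pose proof (Rmin_l d1 d2); pose proof (Rmin_r d1 d2).
  specialize (P1 s ltac:(unfold s; lra)). specialize (P2 s ltac:(unfold s; lra)).
  specialize (Hle s ltac:(unfold s; lra)).
  apply Rabs_def2 in P1. apply Rabs_def2 in P2. unfold e in *. lra.
Qed.

Lemma ED_left_le f x K : 0 < x -> ED f x -> (forall s, 0 < s < x -> f s <= K) -> f x <= K.
Proof.
  intros Hx Hf Hle. destruct (Rle_or_lt (f x) K) as [|Hc]; auto. exfalso.
  destruct (Hf (f x - K)) as [d [Hd P]]; [lra|].
  set (s := x - Rmin x d / 2).
  assert (0 < Rmin x d) by (apply Rmin_pos; auto).
  pose proof (Rmin_l x d); pose proof (Rmin_r x d).
  specialize (P s ltac:(unfold s; rewrite Rabs_left; lra)).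
  specialize (Hle s ltac:(unfold s; lra)). apply Rabs_def2 in P. lra.
Qed.

Lemma ED_lt f x K : ED f x -> f x < K -> exists d, 0 < d /\ forall s, Rabs (s - x) < d -> f s < K.
Proof.
  intros Hf Hl. destruct (Hf (K - f x)) as [d [Hd P]]; [lra|]. exists d; split; auto.
  intros s Hs. specialize (P s Hs). apply Rabs_def2 in P. lra.
Qed.
Lemma ED_gt f x K : ED f x -> K < f x -> exists d, 0 < d /\ forall s, Rabs (s - x) < d -> K < f s.
Proof.
  intros Hf Hl. destruct (Hf (f x - K)) as [d [Hd P]]; [lra|]. exists d; split; auto.
  intros s Hs. specialize (P s Hs). apply Rabs_def2 in P. lra.
Qed.
Lemma RC_lt f K : RC f -> f 0 < K -> exists d, 0 < d /\ forall s, 0 < s < d -> f s < K.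
Proof.
  intros Hf Hl. destruct (Hf (K - f 0)) as [d [Hd P]]; [lra|]. exists d; split; auto.
  intros s Hs. specialize (P s Hs). apply Rabs_def2 in P. lra.
Qed.
Lemma RC_gt f K : RC f -> K < f 0 -> exists d, 0 < d /\ forall s, 0 < s < d -> K < f s.
Proof.
  intros Hf Hl. destruct (Hf (f 0 - K)) as [d [Hd P]]; [lra|]. exists d; split; auto.
  intros s Hs. specialize (P s Hs). apply Rabs_def2 in P. lra.
Qed.

Lemma der_F x g m u : is_derive x u (x u * g u) ->
  is_derive (fun v => x v * exp (-m * v)) u (x u * exp (-m*u) * (g u - m)).
Proof.
  intros H.
  assert (He : is_derive (fun v => exp (-m * v)) u (-m * exp (-m*u))).
  { auto_derive; [auto| ring]. }
  pose proof (is_derive_mult x (fun v => exp (-m*v)) u _ _ H He) as K.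
  assert (forall n m : R_AbsRing, mult n m = mult m n) as C.
  { intros; apply Rmult_comm. }
  specialize (K C). eapply is_derive_ext; [| eapply (is_derive_ext _ _ _ _ (fun _ => eq_refl)) ].
  2: { replace (x u * exp (- m * u) * (g u - m)) with
        (plus (mult (x u * g u) (exp (-m*u))) (mult (x u) (-m * exp (-m*u)))).
       exact K. unfold plus, mult; simpl. ring. }
  intros; reflexivity.
Qed.

Lemma mvt_F x g m s t : 0 < s < t -> (forall u, s <= u <= t -> is_derive x u (x u * g u)) ->
  (forall u, s < u < t -> (0 <= x u * (g u - m))) ->
  x s * exp (-m*s) <= x t * exp (-m*t).
Proof.
  intros Hst Hd Hp.
  destruct (MVT_cor2 (fun v => x v * exp (-m * v)) (fun u => x u * exp (-m*u) * (g u - m)) s t)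
    as [c [Ec Hc]]; [lra| |].
  { intros c Hc. apply is_derive_Reals. apply der_F. apply Hd; lra. }
  assert (0 <= x c * exp (- m * c) * (g c - m) * (t - s)).
  { replace (x c * exp (- m * c) * (g c - m) * (t - s)) with
      ((x c * (g c - m)) * exp (-m*c) * (t-s)) by ring.
    apply Rmult_le_pos; [|lra]. apply Rmult_le_pos; [apply Hp; lra|]. left; apply exp_pos. }
  lra.
Qed.

Lemma RC_expmul A k : RC (fun u => A * exp (k * u)).
Proof. apply ED_RC. apply der_ED. auto_derive. auto. Qed.

Lemma exp_lower x g m t : 0 < t -> RC x ->
  (forall s, 0 < s <= t -> is_derive x s (x s * g s)) ->
  (forall s, 0 < s < t -> 0 < x s /\ m <= g s) -> x 0 * exp (m*t) <= x t.
Proof.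
  intros Ht Hrc Hd Hp.
  assert (K : x 0 <= x t * exp (-m*t) * exp (m*0)).
  { apply (RC_le x (fun u => x t * exp (-m*t) * exp (m*u)) t Ht Hrc (RC_expmul _ _)).
    intros s Hs. pose proof (mvt_F x g m s t Hs ltac:(intros; apply Hd; lra)) as M.
    assert (M' : x s * exp (- m * s) <= x t * exp (- m * t)).
    { apply M. intros u Hu. destruct (Hp u ltac:(lra)) as [P Q].
      apply Rmult_le_pos; lra. }
    apply Rmult_le_compat_r with (r := exp (m*s)) in M'; [|left; apply exp_pos].
    rewrite Rmult_assoc, <- exp_plus in M'.
    replace (-m*s + m*s) with 0 in M' by ring. rewrite exp_0, Rmult_1_r in M'. exact M'. }
  rewrite Rmult_0_r, exp_0, Rmult_1_r in K.
  apply Rmult_le_compat_r with (r := exp (m*t)) in K; [|left; apply exp_pos].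
  rewrite Rmult_assoc, <- exp_plus in K.
  replace (-m*t + m*t) with 0 in K by ring. rewrite exp_0, Rmult_1_r in K. exact K.
Qed.

Lemma exp_upper x g M t : 0 < t -> RC x ->
  (forall s, 0 < s <= t -> is_derive x s (x s * g s)) ->
  (forall s, 0 < s < t -> 0 < x s /\ g s <= M) -> x t <= x 0 * exp (M*t).
Proof.
  intros Ht Hrc Hd Hp.
  set (y := fun u => - x u).
  assert (Hy : forall s, 0 < s <= t -> is_derive y s (y s * g s)).
  { intros s Hs. unfold y. replace (- x s * g s) with (- (x s * g s)) by ring.
    apply (is_derive_opp x s (x s * g s)), Hd, Hs. }
  assert (K : x t * exp (-M*t) * exp (M*0) <= x 0).
  { apply (RC_le (fun u => x t * exp (-M*t) * exp (M*u)) x t Ht (RC_expmul _ _) Hrc).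
    intros s Hs. pose proof (mvt_F y g M s t Hs ltac:(intros; apply Hy; lra)) as Mv.
    assert (M' : y s * exp (- M * s) <= y t * exp (- M * t)).
    { apply Mv. intros u Hu. destruct (Hp u ltac:(lra)) as [P Q]. unfold y.
      replace (- x u * (g u - M)) with (x u * (M - g u)) by ring.
      apply Rmult_le_pos; lra. }
    unfold y in M'.
    apply Rmult_le_compat_r with (r := exp (M*s)) in M'; [|left; apply exp_pos].
    rewrite !Rmult_assoc, <- !exp_plus in M'.
    replace (-M*s + M*s) with 0 in M' by ring. rewrite exp_0, Rmult_1_r in M'. rewrite Rmult_assoc, <- exp_plus. lra. }
  rewrite Rmult_0_r, exp_0, Rmult_1_r in K.
  apply Rmult_le_compat_r with (r := exp (M*t)) in K; [|left; apply exp_pos].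
  rewrite Rmult_assoc, <- exp_plus in K.
  replace (-M*t + M*t) with 0 in K by ring. rewrite exp_0, Rmult_1_r in K. exact K.
Qed.

Lemma exp_mono x y : x <= y -> exp x <= exp y.
Proof. intros [H|H]; [left; apply exp_increasing; auto| subst; lra]. Qed.

Lemma dR_ge3 d : (3 <= d)%nat -> 3 <= INR d.
Proof. intros H. apply le_INR in H. simpl in H. lra. Qed.

Lemma ld_pos d : (3 <= d)%nat -> 0 < ln (INR d).
Proof. intros H. apply dR_ge3 in H. rewrite <- ln_1. apply ln_increasing; lra. Qed.

Lemma rho0_pos d c0 : 0 < rho0 d c0.
Proof. unfold rho0, Rpower. apply exp_pos. Qed.

Lemma rho0_lower d c0 : (3 <= d)%nat -> 0 < c0 -> exp (- c0 * ln (INR d)) <= rho0 d c0.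
Proof.
  intros Hd Hc. pose proof (ld_pos d Hd) as L. unfold rho0, Rpower. apply exp_mono.
  pose proof (exp_ineq1_le (ln (ln (INR d)))) as E. rewrite exp_ln in E by lra.
  nra.
Qed.

Lemma rho0_small c0 del : 0 < c0 -> 0 < del -> exists D : nat,
  forall d, (D <= d)%nat -> (3 <= d)%nat -> rho0 d c0 <= del.
Proof.
  intros Hc Hdel. set (X := Rabs (ln del) / c0).
  destruct (INR_archimed 1 (exp (exp X)) ltac:(lra)) as [n Hn].
  exists n. intros d Hnd H3. apply le_INR in Hnd.
  assert (Y : exp (exp X) < INR d) by lra.
  apply ln_increasing in Y; [|apply exp_pos]. rewrite ln_exp in Y.
  apply ln_increasing in Y; [|apply exp_pos]. rewrite ln_exp in Y.
  unfold rho0, Rpower.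
  apply Rle_trans with (exp (ln del)); [|rewrite exp_ln; lra].
  apply exp_mono.
  assert (c0 * X = Rabs (ln del)) by (unfold X; field; lra).
  pose proof (Rle_abs (- ln del)). rewrite Rabs_Ropp in H0. nra.
Qed.

Theorem propositionB3 :
  forall (c0 K1 K2 rho : R),
    0 < c0 -> 0 < K1 -> 0 < K2 -> 0 < rho < 1 / 12 ->
    exists CT Ca CC : R,
      forall eps : R, 0 < eps ->
      exists D : nat,
        forall (d : nat) (lam : R) (a b c : R -> R),
          (3 <= d)%nat -> (D <= d)%nat ->
          0 < lam -> K1 * ln (INR d) <= lam <= K2 * INR d ->
          is_solution d lam c0 a b c ->
          exists T : R,
            T1a d lam rho a b c = Finite T /\
            (forall t, 0 <= t <= T ->
               rfun d lam a b c t <= rho /\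
               a 0 * exp (24 * (1 - rho) * t) <= a t <= a 0 * exp (24 * t) /\
               b 0 * exp (8 * (1 + lam) * (1 - 3 * rho) * t) <= b t
                 <= b 0 * exp (8 * (1 + lam) * t) /\
               c 0 * exp ((8 * (1 - rho) - 16 * rho / (INR d - 2)) * t) <= c t
                 <= c 0 * exp (8 * t)) /\
            T <= CT * ln (INR d) / lam /\
            Rabs (a T) <= Ca * rho0 d c0 / INR d /\
            Rabs ((INR d - 2) * c T) <= CC * rho0 d c0 /\
            (1 + lam) * b T = rho - a T - (INR d - 2) * c T /\
            Rabs ((1 + lam) * b T / rho - 1) <= eps.
Proof.
  intros c0 K1 K2 rho Hc0 HK1 HK2 Hrho.
  set (Ca := exp (4 * (1 + c0) / K1)).
  assert (HCa : 0 < Ca) by apply exp_pos.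
  exists ((1 + c0) / 6), Ca, Ca.
  intros eps Heps.
  set (del := Rmin (rho / 2) (eps * rho / (2 * Ca))).
  assert (Hdel : 0 < del).
  { apply Rmin_pos; [lra|]. apply Rdiv_lt_0_compat; nra. }
  destruct (rho0_small c0 del Hc0 Hdel) as [D HD].
  exists D. intros d lam a b c Hd3 HdD Hlam [Hl1 Hl2] Hsol.
  destruct Hsol as [Ha0 [Hb0 [Hc00 [Hder [Hra [Hrb Hrc]]]]]].
  pose proof (dR_ge3 d Hd3) as HdR. set (dR := INR d) in *.
  pose proof (ld_pos d Hd3) as Hld. fold dR in Hld. set (ld := ln dR) in *.
  pose proof (rho0_pos d c0) as Hp0. pose proof (HD d HdD Hd3) as Hp0d.
  pose proof (rho0_lower d c0 Hd3 Hc0) as Hp0l.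
  fold dR in Hp0l. fold ld in Hp0l.
  set (p0 := rho0 d c0) in *.
  assert (Hdel1 : del <= rho / 2) by apply Rmin_l.
  assert (Hdel2 : del <= eps * rho / (2 * Ca)) by apply Rmin_r.
  set (m := mu d lam c0) in *.
  assert (Hm : m = p0 / (dR + lam)) by reflexivity.
  assert (Hmpos : 0 < m) by (rewrite Hm; apply Rdiv_lt_0_compat; lra).
  set (r := rfun d lam a b c) in *.
  assert (Hr : forall s, r s = a s + (1 + lam) * b s + (dR - 2) * c s) by reflexivity.
  apply rc_RC in Hra. apply rc_RC in Hrb. apply rc_RC in Hrc.
  assert (Hrr : RC r).
  { apply (RC_lin (fun s => a s + (1 + lam) * b s) c (dR - 2)); [|exact Hrc].
    apply RC_lin; assumption. }
  assert (EDa : forall t, 0 < t -> ED a t).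
  { intros t Ht. apply der_ED. eexists. apply (Hder t Ht). }
  assert (EDb : forall t, 0 < t -> ED b t).
  { intros t Ht. apply der_ED. eexists. apply (Hder t Ht). }
  assert (EDc : forall t, 0 < t -> ED c t).
  { intros t Ht. apply der_ED. eexists. apply (Hder t Ht). }
  assert (EDr : forall t, 0 < t -> ED r t).
  { intros t Ht. apply der_ED. unfold r, rfun.
    destruct (Hder t Ht) as [Da [Db Dc]].
    auto_derive. repeat split; eexists; eassumption. }
  set (G := fun s => 0 < a s /\ 0 < b s /\ 0 < c s /\ r s < rho).
  assert (BND : forall t, 0 < t -> (forall s, 0 < s < t -> G s) ->
     m * exp (24 * (1 - rho) * t) <= a t <= m * exp (24 * t) /\
     m * exp (8 * (1 + lam) * (1 - 3 * rho) * t) <= b t <= m * exp (8 * (1 + lam) * t) /\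
     m * exp ((8 * (1 - rho) - 16 * rho / (dR - 2)) * t) <= c t <= m * exp (8 * t)).
  { intros t Ht HG.
    assert (HG' : forall s, 0 < s < t -> 0 < a s /\ 0 < b s /\ 0 < c s /\ r s < rho /\
              (1 + lam) * b s <= r s /\ a s <= r s /\ (dR - 2) * c s <= r s /\ 0 < r s).
    { intros s Hs. destruct (HG s Hs) as [A [B [C R]]].
      assert (0 < (1 + lam) * b s) by (apply Rmult_lt_0_compat; lra).
      assert (0 < (dR - 2) * c s) by (apply Rmult_lt_0_compat; lra).
      pose proof (Hr s). lra. }
    set (ga := fun s => 24 - 16 * a s - 8 * r s).
    set (gb := fun s => 8 * (1 + lam) * (1 - r s) - 16 * (1 + lam) ^ 2 * b s).
    set (gc := fun s => 8 * (1 - r s) - 16 * c s).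
    assert (Da : forall s, 0 < s <= t -> is_derive a s (a s * ga s)).
    { intros s Hs. apply (Hder s ltac:(lra)). }
    assert (Db : forall s, 0 < s <= t -> is_derive b s (b s * gb s)).
    { intros s Hs. unfold gb.
      replace (b s * (8 * (1 + lam) * (1 - r s) - 16 * (1 + lam) ^ 2 * b s)) with
        (8 * (1 + lam) * (1 - r s) * b s - 16 * (1 + lam) ^ 2 * b s ^ 2) by ring.
      apply (Hder s ltac:(lra)). }
    assert (Dc : forall s, 0 < s <= t -> is_derive c s (c s * gc s)).
    { intros s Hs. unfold gc.
      replace (c s * (8 * (1 - r s) - 16 * c s)) with
        (8 * (1 - r s) * c s - 16 * c s ^ 2) by ring.
      apply (Hder s ltac:(lra)). }
    rewrite <- Ha0 at 1 2. rewrite <- Hb0 at 1 2. rewrite <- Hc00 at 1 2.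
    repeat split.
    - apply (exp_lower a ga); auto. intros s Hs. destruct (HG' s Hs) as (?&?&?&?&?&?&?&?).
      split; auto. unfold ga. lra.
    - apply (exp_upper a ga); auto. intros s Hs. destruct (HG' s Hs) as (?&?&?&?&?&?&?&?).
      split; auto. unfold ga. lra.
    - apply (exp_lower b gb); auto. intros s Hs. destruct (HG' s Hs) as (?&?&?&?&?&?&?&?).
      split; auto. unfold gb. nra.
    - apply (exp_upper b gb); auto. intros s Hs. destruct (HG' s Hs) as (?&?&?&?&?&?&?&?).
      split; auto. unfold gb. nra.
    - apply (exp_lower c gc); auto. intros s Hs. destruct (HG' s Hs) as (?&?&?&?&?&?&?&?).
      split; auto. unfold gc.
      assert (c s <= rho / (dR - 2)) by (apply Rle_div_r; lra).
      lra.
    - apply (exp_upper c gc); auto. intros s Hs. destruct (HG' s Hs) as (?&?&?&?&?&?&?&?).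
      split; auto. unfold gc. lra. }

  set (S := fun t => 0 <= t /\ ~ G t).
  set (t1 := (1 + c0) * ld / (6 * lam)).
  assert (Ht1 : 0 < t1) by (unfold t1; apply Rdiv_lt_0_compat; [apply Rmult_lt_0_compat|]; lra).
  assert (Hlm : (1 + lam) * m >= p0 / dR).
  { rewrite Hm. unfold Rdiv. apply Rle_ge.
    apply Rmult_le_reg_r with (dR * (dR + lam)); [nra|].
    field_simplify; [|lra|lra]. assert (0 <= p0 * lam * (dR - 1)) by (apply Rmult_le_pos; [apply Rmult_le_pos|]; lra). nra. }
  assert (Ex : exists t0, S t0 /\ t0 <= t1).
  { apply NNPP. intros Hn.
    assert (Gall : forall s, 0 <= s <= t1 -> G s).
    { intros s Hs. apply NNPP. intros Hg. apply Hn. exists s. split; [split|]; lra || auto. }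
    destruct (BND t1 Ht1 (fun s Hs => Gall s ltac:(lra))) as [_ [[Hb1 _] _]].
    assert (E1 : exp (8 * (1 + lam) * (1 - 3 * rho) * t1) >= exp ((1 + c0) * ld)).
    { apply Rle_ge, exp_mono.
      replace ((1 + c0) * ld) with (6 * lam * t1) by (unfold t1; field; lra). assert (H6: 6 * lam <= 8 * (1 + lam) * (1 - 3 * rho)) by nra. apply Rmult_le_compat_r; lra. }
    assert (E2 : exp ((1 + c0) * ld) = dR * exp (c0 * ld)).
    { replace ((1 + c0) * ld) with (ld + c0 * ld) by ring. rewrite exp_plus.
      unfold ld. rewrite exp_ln; lra. }
    assert (E3 : exp (- c0 * ld) * exp (c0 * ld) = 1).
    { rewrite <- exp_plus. replace (- c0 * ld + c0 * ld) with 0 by ring. apply exp_0. }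
    assert (B1 : (1 + lam) * b t1 >= 1).
    { assert (0 < exp (c0 * ld)) by apply exp_pos.
      assert (0 < exp (- c0 * ld)) by apply exp_pos.
      assert ((1 + lam) * b t1 >= (1 + lam) * m * (dR * exp (c0 * ld))).
      { rewrite <- E2. rewrite Rmult_assoc. apply Rle_ge, Rmult_le_compat_l; [lra|]. eapply Rle_trans; [|exact Hb1]. apply Rmult_le_compat_l; lra. }
      assert ((1 + lam) * m * (dR * exp (c0 * ld)) >= p0 / dR * (dR * exp (c0 * ld))).
      { apply Rle_ge, Rmult_le_compat_r; [nra|lra]. }
      assert (p0 / dR * (dR * exp (c0 * ld)) = p0 * exp (c0 * ld)) by (field; lra).
      nra. }
    destruct (Gall t1 ltac:(lra)) as [A [B [C R]]].
    assert (0 < (dR - 2) * c t1) by (apply Rmult_lt_0_compat; lra).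
    pose proof (Hr t1). lra. }
  destruct Ex as [t0 [HSt0 Ht0]].
  assert (HL := Glb_Rbar_correct S).
  destruct (Glb_Rbar S) as [T| |] eqn:ET; destruct HL as [Hlb Hglb].
  2: { specialize (Hlb t0 HSt0). simpl in Hlb. contradiction. }
  2: { assert (Rbar_le 0 m_infty); [apply Hglb; intros x [Hx _]; simpl; lra| simpl in *; contradiction]. }
  assert (HT0 : 0 <= T).
  { assert (Rbar_le 0 T) by (apply Hglb; intros x [Hx _]; simpl; lra). simpl in *; lra. }
  assert (HTt1 : T <= t1) by (specialize (Hlb t0 HSt0); simpl in Hlb; lra).
  assert (Gbef : forall s, 0 <= s < T -> G s).
  { intros s Hs. apply NNPP. intros Hg. specialize (Hlb s (conj (proj1 Hs) Hg)).
    simpl in Hlb. lra. }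
  assert (Hr0 : r 0 = p0).
  { rewrite Hr, Ha0, Hb0, Hc00, Hm. field. lra. }
  assert (G0 : G 0).
  { unfold G. rewrite Ha0, Hb0, Hc00, Hr0. repeat split; lra. }
  assert (HTpos : 0 < T).
  { destruct HT0 as [|HT0]; auto. exfalso.
    destruct (RC_gt a 0 Hra ltac:(lra)) as [d1 [Hd1 P1]].
    destruct (RC_gt b 0 Hrb ltac:(lra)) as [d2 [Hd2 P2]].
    destruct (RC_gt c 0 Hrc ltac:(lra)) as [d3 [Hd3' P3]].
    destruct (RC_lt r rho Hrr ltac:(lra)) as [d4 [Hd4 P4]].
    set (dd := Rmin (Rmin d1 d2) (Rmin d3 d4)).
    assert (0 < dd) by (unfold dd; repeat apply Rmin_pos; auto).
    assert (dd <= d1 /\ dd <= d2 /\ dd <= d3 /\ dd <= d4).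
    { unfold dd. pose proof (Rmin_l d1 d2); pose proof (Rmin_r d1 d2).
      pose proof (Rmin_l d3 d4); pose proof (Rmin_r d3 d4).
      pose proof (Rmin_l (Rmin d1 d2) (Rmin d3 d4)); pose proof (Rmin_r (Rmin d1 d2) (Rmin d3 d4)).
      lra. }
    assert (Rbar_le (dd / 2) T).
    { apply Hglb. intros x [Hx Hg]. simpl.
      destruct (Rle_or_lt dd x); [lra|]. exfalso. apply Hg.
      destruct Hx as [Hx|Hx].
      - unfold G. repeat split; [apply P1|apply P2|apply P3|apply P4]; lra.
      - subst x. exact G0. }
    simpl in *. lra. }
  destruct (BND T HTpos (fun s Hs => Gbef s ltac:(lra))) as [[HaL HaU] [[HbL HbU] [HcL HcU]]].
  assert (HaT : 0 < a T) by (eapply Rlt_le_trans; [|exact HaL]; apply Rmult_lt_0_compat; [lra|apply exp_pos]).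
  assert (HbT : 0 < b T) by (eapply Rlt_le_trans; [|exact HbL]; apply Rmult_lt_0_compat; [lra|apply exp_pos]).
  assert (HcT : 0 < c T) by (eapply Rlt_le_trans; [|exact HcL]; apply Rmult_lt_0_compat; [lra|apply exp_pos]).
  assert (HrT1 : r T <= rho).
  { apply ED_left_le; auto. intros s Hs. left. apply (Gbef s ltac:(lra)). }
  assert (HrT : r T = rho).
  { destruct HrT1 as [HrT1|]; auto. exfalso.
    destruct (ED_gt a T 0 (EDa T HTpos) HaT) as [d1 [Hd1 P1]].
    destruct (ED_gt b T 0 (EDb T HTpos) HbT) as [d2 [Hd2 P2]].
    destruct (ED_gt c T 0 (EDc T HTpos) HcT) as [d3 [Hd3' P3]].
    destruct (ED_lt r T rho (EDr T HTpos) HrT1) as [d4 [Hd4 P4]].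
    set (dd := Rmin (Rmin d1 d2) (Rmin d3 d4)).
    assert (0 < dd) by (unfold dd; repeat apply Rmin_pos; auto).
    assert (dd <= d1 /\ dd <= d2 /\ dd <= d3 /\ dd <= d4).
    { unfold dd. pose proof (Rmin_l d1 d2); pose proof (Rmin_r d1 d2).
      pose proof (Rmin_l d3 d4); pose proof (Rmin_r d3 d4).
      pose proof (Rmin_l (Rmin d1 d2) (Rmin d3 d4)); pose proof (Rmin_r (Rmin d1 d2) (Rmin d3 d4)).
      lra. }
    assert (Rbar_le (T + dd / 2) T).
    { apply Hglb. intros x Hx. simpl. pose proof (Hlb x Hx) as Hx2. simpl in Hx2.
      destruct Hx as [Hx Hg].
      destruct (Rle_or_lt (T + dd) x); [lra|]. exfalso. apply Hg.
      assert (Rabs (x - T) < dd) by (rewrite Rabs_right; lra).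
      unfold G. repeat split; [apply P1|apply P2|apply P3|apply P4]; lra. }
    simpl in *. lra. }
  exists T. split.
  { unfold T1a. apply is_glb_Rbar_unique. split.
    - intros x [Hx Hrx]. apply (Hlb x). split; auto. intros [_ [_ [_ Hc]]]. fold r in Hrx. lra.
    - intros bb Hbb. apply Hbb. split; [lra|]. fold r. lra. }
  assert (HldK : ld / lam <= / K1).
  { apply Rle_div_l; [lra|]. apply Rmult_le_reg_l with K1; [lra|].
    field_simplify; lra. }
  assert (E24 : exp (24 * T) <= Ca).
  { unfold Ca. apply exp_mono.
    assert (24 * t1 = 4 * (1 + c0) * (ld / lam)) by (unfold t1; field; lra).
    assert (4 * (1 + c0) / K1 = 4 * (1 + c0) * / K1) by (unfold Rdiv; ring).
    nra. }
  assert (E8 : exp (8 * T) <= Ca).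
  { eapply Rle_trans; [|exact E24]. apply exp_mono. lra. }
  assert (HmdR : m <= p0 / dR).
  { rewrite Hm. apply Rmult_le_compat_l; [lra|]. apply Rinv_le_contravar; lra. }
  assert (HmdR2 : (dR - 2) * m <= p0).
  { rewrite Hm.
    replace ((dR - 2) * (p0 / (dR + lam))) with (p0 * ((dR - 2) / (dR + lam))) by (field; lra).
    rewrite <- (Rmult_1_r p0) at 2. apply Rmult_le_compat_l; [lra|].
    apply (proj1 (Rdiv_le_1 (dR - 2) (dR + lam) ltac:(lra))); lra. }
  assert (Hae : a T <= Ca * p0 / dR).
  { eapply Rle_trans; [exact HaU|].
    assert (m * exp (24 * T) <= p0 / dR * Ca).
    { apply Rmult_le_compat; try lra. left; apply exp_pos. }
    unfold Rdiv in *. lra. }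
  assert (Hce : (dR - 2) * c T <= Ca * p0).
  { apply Rle_trans with ((dR - 2) * (m * exp (8 * T))).
    { apply Rmult_le_compat_l; lra. }
    rewrite <- Rmult_assoc. rewrite (Rmult_comm Ca p0).
    apply Rmult_le_compat; [apply Rmult_le_pos; lra | left; apply exp_pos | lra | lra]. }
  assert (HCpos : 0 < (dR - 2) * c T) by (apply Rmult_lt_0_compat; lra).
  assert (HBeq : (1 + lam) * b T = rho - a T - (dR - 2) * c T).
  { pose proof (Hr T). lra. }
  split.
  { intros t Ht. split.
    - destruct (Rle_lt_or_eq_dec t T ltac:(lra)) as [Hlt|Heq].
      + left. apply (Gbef t ltac:(lra)).
      + subst t. lra.
    - destruct (Rle_lt_or_eq_dec 0 t ltac:(lra)) as [Hlt|Heq].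
      + rewrite Ha0, Hb0, Hc00.
        apply BND; auto. intros s Hs. apply Gbef. lra.
      + subst t. rewrite !Rmult_0_r, !exp_0, !Rmult_1_r. repeat split; lra. }
  split.
  { replace ((1 + c0) / 6 * ld / lam) with t1 by (unfold t1; field; lra). lra. }
  split.
  { rewrite Rabs_right; lra. }
  split.
  { rewrite Rabs_right; lra. }
  split; [exact HBeq|].
  rewrite HBeq.
  replace ((rho - a T - (dR - 2) * c T) / rho - 1) with (- ((a T + (dR - 2) * c T) / rho))
    by (field; lra).
  rewrite Rabs_Ropp, Rabs_right.
  2: { apply Rle_ge, Rdiv_le_0_compat; lra. }
  apply Rle_div_l; [lra|].
  assert (Ca * p0 / dR <= Ca * p0).
  { unfold Rdiv. rewrite <- (Rmult_1_r (Ca * p0)) at 2. apply Rmult_le_compat_l; [nra|].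
    rewrite <- Rinv_1. apply Rinv_le_contravar; lra. }
  assert (Ca * p0 <= eps * rho / 2).
  { apply Rle_trans with (Ca * (eps * rho / (2 * Ca))).
    - apply Rmult_le_compat_l; lra.
    - right. field. lra. }
  lra.
Qed.
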